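(* Let $n,d,r,k$ be positive integers with $n\geq\mathrm{R}\big(2d,\,r+2d-1,\,2^{k2^{2d^2+d}}\big)$. Then for every collection $\boldsymbol\lambda=\langle\lambda_F: F\in\binom{\binom{[n]}{\leq 2}}{\leq d}\rangle$ of elements of $\mathbb{Z}_{2^k}$ there exists $X\subseteq[n]$ with $|X|=r$ such that $\boldsymbol\lambda$ is canonical in $X$.
   Context: For a set $S$ and integer $j\geq 1$, $\binom{S}{\leq j}$ denotes the set of nonempty subsets of $S$ with at most $j$ elements, and $\binom{S}{j}$ those with exactly $j$ elements. $\mathbb{Z}_{2^k}=\mathbb{Z}/2^k\mathbb{Z}$. Ramsey numbers: for positive integers $\ell\leq m$ and $c$, $\mathrm{R}(\ell,m,c)$ is the least positive integer $N$ such that for every $n\geq N$ and every colouring $\chi\colon\binom{[n]}{\ell}\to[c]$ there is $X\in\binom{[n]}{m}$ with $\chi$ constant on $\binom{X}{\ell}$. Type: for a nonempty set $F$ of nonempty subsets of $[n]$, write $\bigcup F=\{u_1<\dots<u_\ell\}$ and set $\tau(F)=\{S\subseteq[\ell]: \{u_i: i\in S\}\in F\}$. Canonical: a collection $\boldsymbol\lambda=\langle\lambda_F: F\in\binom{\binom{[n]}{\leq 2}}{\leq d}\rangle$ is canonical in a nonempty $X\subseteq[n]$ if $\lambda_{F_1}=\lambda_{F_2}$ whenever $F_1,F_2\in\binom{\binom{X}{\leq 2}}{\leq d}$ satisfy $\tau(F_1)=\tau(F_2)$. *)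

(* Defs.v *)
From mathcomp Require Import all_boot all_order all_algebra.
Set Implicit Arguments. Unset Strict Implicit. Unset Printing Implicit Defensive.

(* [n] is represented by 'I_n = {0,...,n-1} (order-preserving relabelling). *)

(* Ramsey property: for every m' >= N and every colouring of the l-subsets of
   [m'] with c colours there is an m-subset X on whose l-subsets chi is constant.
   (A colouring of l-subsets is given as a function on all subsets; only its
   values on l-subsets matter.) *)
Definition ramsey_prop (l m c N : nat) : Prop :=
  forall n', N <= n' -> forall chi : {set 'I_n'} -> 'I_c,
    exists X : {set 'I_n'}, #|X| = m /\
      (forall S1 S2 : {set 'I_n'}, S1 \subset X -> S2 \subset X ->
         #|S1| = l -> #|S2| = l -> chi S1 = chi S2).

Definition is_ramsey_number (l m c N : nat) : Prop :=
  ramsey_prop l m c N /\ forall N', ramsey_prop l m c N' -> N <= N'.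

Section Canon.
Variable n : nat.

(* F is in binom(binom(S, <=2), <=d): a nonempty set of at most d nonempty
   subsets of S, each of size at most 2. *)
Definition in_dom (d : nat) (S : {set 'I_n}) (F : {set {set 'I_n}}) : bool :=
  [&& F != set0, #|F| <= d &
      [forall A in F, [&& A != set0, #|A| <= 2 & A \subset S]]].

Definition bigU (F : {set {set 'I_n}}) : {set 'I_n} := \bigcup_(A in F) A.

Definition usort (F : {set {set 'I_n}}) : seq nat :=
  sort leq [seq val x | x <- enum (bigU F)].

Definition uset (F : {set {set 'I_n}}) (S : {set 'I_n}) : {set 'I_n} :=
  [set x : 'I_n | [exists i in S, nth 0 (usort F) i == val x]].

(* type tau(F) = {S subset of [l] : {u_i : i in S} in F}, where l = |bigU F|
   and [l] is represented by {0,...,l-1} (inside 'I_n, as l <= n). *)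
Definition tau (F : {set {set 'I_n}}) : {set {set 'I_n}} :=
  [set S : {set 'I_n} | (S \subset [set i : 'I_n | val i < #|bigU F|])
                        && (uset F S \in F)].

Definition canonical_in {V : Type} (d : nat) (lam : {set {set 'I_n}} -> V)
    (X : {set 'I_n}) : Prop :=
  forall F1 F2, in_dom d X F1 -> in_dom d X F2 -> tau F1 = tau F2 ->
    lam F1 = lam F2.

End Canon.

(* Main.v *)
Require Import Defs.
From mathcomp Require Import all_boot all_order all_algebra.
From mathcomp Require Import zify.
Set Implicit Arguments. Unset Strict Implicit. Unset Printing Implicit Defensive.

Lemma count_card (T : finType) (B : {set T}) (P : pred T) :
  count P (enum B) = #|[set y in B | P y]|.
Proof.
rewrite cardE -size_filter /enum_mem -filter_predI.
by apply: congr1; apply: eq_filter => y /=; rewrite !inE andbC.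
Qed.

Lemma index_sorted_ltn (s : seq nat) v : sorted ltn s -> v \in s ->
  index v s = count (fun w => w < v) s.
Proof.
elim: s => [//|a s IH] /= Hp.
have Ha := order_path_min ltn_trans Hp.
have Hs := path_sorted Hp.
have [->|ne] := eqVneq v a => Hv.
  rewrite ltnn add0n; apply/esym/eqP; rewrite -leqn0 leqNgt -has_count.
  apply/hasPn => w /(allP Ha) aw; rewrite -leqNgt; exact: ltnW.
move: Hv; rewrite in_cons (negPf ne) /= => Hv.
by rewrite IH // (allP Ha v Hv) add1n.
Qed.

Section Rank.
Variable n' : nat.
Local Notation n := n'.+1.
Implicit Types (A B S : {set 'I_n}) (x y : 'I_n).

Definition sortB B : seq nat := sort leq [seq val x | x <- enum B].
Definition usetB B (S : {set 'I_n}) : {set 'I_n} :=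
  [set x : 'I_n | [exists i in S, nth 0 (sortB B) i == val x]].
Definition rank B x := #|[set y in B | val y < val x]|.
Definition rk B x : 'I_n := inord (rank B x).

Lemma sortB_uniq B : uniq (sortB B).
Proof. rewrite sort_uniq map_inj_uniq ?enum_uniq //; exact: val_inj. Qed.
Lemma sortB_sorted B : sorted ltn (sortB B).
Proof. by rewrite ltn_sorted_uniq_leq sortB_uniq sort_sorted //; exact: leq_total. Qed.
Lemma size_sortB B : size (sortB B) = #|B|.
Proof. by rewrite size_sort size_map cardE. Qed.
Lemma mem_sortB B x : (val x \in sortB B) = (x \in B).
Proof. by rewrite mem_sort mem_map ?mem_enum //; exact: val_inj. Qed.

Lemma rank_count B x : rank B x = count (fun w => w < val x) (sortB B).
Proof.
rewrite /rank /sortB (permP (permEl (perm_sort _ _))) count_map count_card.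
by apply: eq_card => y; rewrite !inE.
Qed.

Lemma nth_sortB B (i : nat) x : i < #|B| ->
  (nth 0 (sortB B) i == val x) = (x \in B) && (rank B x == i).
Proof.
move=> hi; rewrite -size_sortB in hi.
case xB: (x \in B) => /=.
- rewrite rank_count -index_sorted_ltn ?sortB_sorted ?mem_sortB //.
  change (\val x) with (nat_of_ord x).
  apply/eqP/eqP => [<-|<-]; first by rewrite index_uniq // sortB_uniq.
  by rewrite nth_index ?mem_sortB.
- apply/negbTE/eqP => h. by move: (mem_nth 0 hi); rewrite h mem_sortB xB.
Qed.

Lemma rank_le_card B x : rank B x <= #|B|.
Proof. by apply: subset_leq_card; apply/subsetP => y; rewrite inE => /andP[]. Qed.

Lemma rank_lt B x : x \in B -> rank B x < #|B|.
Proof.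
move=> xB; rewrite (cardsD1 x B) xB add1n ltnS.
apply: subset_leq_card; apply/subsetP => y; rewrite !inE => /andP[yB lt].
by rewrite yB andbT; apply/eqP => e; move: lt; rewrite e ltnn.
Qed.

Lemma card_le_n B : #|B| <= n.
Proof. by rewrite -[X in _ <= X]card_ord max_card. Qed.

Lemma val_rk B x : x \in B -> val (rk B x) = rank B x.
Proof. move=> xB; rewrite /rk /= inordK //; apply: leq_trans (rank_lt xB) _; exact: card_le_n. Qed.

Lemma rank_mono B x y : val y <= val x -> rank B y <= rank B x.
Proof.
move=> le; apply: subset_leq_card; apply/subsetP => z; rewrite !inE => /andP[-> lt].
exact: leq_trans lt le.
Qed.

Lemma rank_strict B x y : x \in B -> val x < val y -> rank B x < rank B y.
Proof.
move=> xB lt; rewrite /rank [X in _ < X](cardsD1 x) inE xB lt add1n ltnS.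
apply: subset_leq_card; apply/subsetP => z; rewrite !inE => /andP[zB lz].
rewrite zB (ltn_trans lz lt) !andbT; apply/eqP => e; by move: lz; rewrite e ltnn.
Qed.

Lemma rank_inj B x y : x \in B -> y \in B -> rank B x = rank B y -> x = y.
Proof.
move=> xB yB e; apply: val_inj; case: (ltngtP (val x) (val y)) => // lt.
- by move: (rank_strict xB lt); rewrite e ltnn.
- by move: (rank_strict yB lt); rewrite e ltnn.
Qed.

Lemma rank_surj B (i : nat) : i < #|B| -> exists2 y, y \in B & rank B y = i.
Proof.
move=> hi; have hi' := hi; rewrite -size_sortB in hi'.
move: (mem_nth 0 hi'); rewrite mem_sort => /mapP [y]; rewrite mem_enum => yB e.
exists y => //; apply/eqP; move: (nth_sortB y hi); rewrite e eqxx yB //.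
Qed.

Definition bnd (j : nat) : {set 'I_n} := [set i : 'I_n | val i < j].

Lemma in_usetB B S x : S \subset bnd #|B| ->
  (x \in usetB B S) = (x \in B) && [exists i in S, val i == rank B x].
Proof.
move=> /subsetP hS; have hS' i : i \in S -> val i < #|B|.
  by move=> iS; have := hS i iS; rewrite inE.
rewrite inE; case xB: (x \in B) => /=.
- apply/existsP/existsP => -[i /andP[iS /eqP h]]; exists i; rewrite iS /=.
  + by move: (nth_sortB x (hS' i iS)); rewrite h eqxx xB /= => /esym/eqP ->.
  + by rewrite nth_sortB ?hS' // xB h eqxx.
- by apply/existsP => -[i /andP[iS]]; rewrite nth_sortB ?hS' // xB.
Qed.

Definition posB B (A : {set 'I_n}) : {set 'I_n} := [set rk B x | x in A].

Lemma posB_bnd B A : A \subset B -> posB B A \subset bnd #|B|.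
Proof.
move=> /subsetP AB; apply/subsetP => i /imsetP [x xA ->].
by rewrite inE val_rk ?AB // rank_lt ?AB.
Qed.

Lemma usetB_posB B A : A \subset B -> usetB B (posB B A) = A.
Proof.
move=> AB; apply/setP => x; rewrite in_usetB ?posB_bnd //.
case xB: (x \in B) => /=; last first.
  by apply/esym/negbTE; apply: contraFN xB; apply: (subsetP AB).
apply/existsP/idP => [[i /andP[/imsetP [a aA ->] /eqP]]|xA].
  rewrite val_rk ?(subsetP AB) // => e.
  by rewrite -(rank_inj (subsetP AB a aA) xB e).
by exists (rk B x); rewrite imset_f //= val_rk.
Qed.

Lemma posB_usetB B S : S \subset bnd #|B| -> posB B (usetB B S) = S.
Proof.
move=> hS; apply/setP => i; apply/imsetP/idP => [[x]|iS].
  rewrite in_usetB // => /andP[xB /existsP [j /andP[jS /eqP e]]] ->.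
  by have -> : rk B x = j by apply: val_inj; rewrite val_rk.
have := subsetP hS i iS; rewrite inE => hi.
have [y yB ry] := rank_surj hi.
exists y; last by apply: val_inj; rewrite val_rk.
by rewrite in_usetB // yB; apply/existsP; exists i; rewrite iS ry eqxx.
Qed.

Lemma card_bnd j : j <= n -> #|bnd j| = j.
Proof.
move=> hj; have -> : bnd j = [set widen_ord hj i | i in 'I_j].
  apply/setP => i; rewrite inE; apply/idP/imsetP => [lt|[k _ ->]] /=; last exact: ltn_ord.
  by exists (Ordinal lt) => //; apply: val_inj.
by rewrite card_imset ?card_ord // => a b /(congr1 val) /= e; apply: val_inj.
Qed.

Lemma card_usetB B S : S \subset bnd #|B| -> #|usetB B S| = #|S|.
Proof.
move=> hS; rewrite -{2}(posB_usetB hS) card_in_imset //.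
move=> x y; rewrite !in_usetB // => /andP[xB _] /andP[yB _] e.
by apply: (rank_inj xB yB); rewrite -!val_rk // e.
Qed.

Lemma usetB_sub B S : S \subset bnd #|B| -> usetB B S \subset B.
Proof. by move=> hS; apply/subsetP => x; rewrite in_usetB // => /andP[]. Qed.

End Rank.

Section Dom.
Variable n' : nat.
Local Notation n := n'.+1.
Implicit Types (A B S Z : {set 'I_n}) (F : {set {set 'I_n}}).

Lemma uset_E F S : uset F S = usetB (Defs.bigU F) S.
Proof. by []. Qed.

Lemma bnd_mono j j' : j <= j' -> bnd n' j \subset bnd n' j'.
Proof. by move=> h; apply/subsetP => i; rewrite !inE => /leq_trans; apply. Qed.

Lemma in_domP d Z F : in_dom d Z F ->
  [/\ F != set0, #|F| <= d &
      forall A, A \in F -> [/\ A != set0, #|A| <= 2 & A \subset Z]].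
Proof. by case/and3P => h1 h2 /forall_inP h3; split => // A /h3 /and3P[]. Qed.

Lemma bigU_sub F A : A \in F -> A \subset Defs.bigU F.
Proof. by move=> AF; rewrite /Defs.bigU (bigcup_sup A AF). Qed.

Lemma bigU_subZ d Z F : in_dom d Z F -> Defs.bigU F \subset Z.
Proof. by case/in_domP => _ _ h; apply/bigcupsP => A /h []. Qed.

Lemma card_bigU d Z F : in_dom d Z F -> 0 < #|Defs.bigU F| <= 2 * d.
Proof.
case/in_domP => ne cF h; apply/andP; split.
  case/set0Pn: ne => A AF; case: (h A AF) => /set0Pn [x xA] _ _.
  by apply/card_gt0P; exists x; apply: (subsetP (bigU_sub AF)).
apply: leq_trans ((leq_card_cover F).1) _.
apply: (@leq_trans (\sum_(A in F) 2)); first by apply: leq_sum => A /h [].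
by rewrite sum_nat_const mulnC leq_mul2l cF orbT.
Qed.

Lemma tau_char d Z F : in_dom d Z F ->
  tau F = [set posB (Defs.bigU F) A | A in F].
Proof.
move=> hF; apply/setP => S; rewrite inE; apply/andP/imsetP.
- case=> hS hU; exists (usetB (Defs.bigU F) S) => //; by rewrite posB_usetB.
- case=> A AF ->; split; first exact: posB_bnd (bigU_sub AF).
  by rewrite uset_E usetB_posB // bigU_sub.
Qed.

Lemma F_E d Z F : in_dom d Z F -> F = [set usetB (Defs.bigU F) S | S in tau F].
Proof.
move=> hF; rewrite (tau_char hF); apply/setP => A; apply/idP/imsetP => [AF|[S]].
  by exists (posB (Defs.bigU F) A); [rewrite imset_f | rewrite usetB_posB // bigU_sub].
by case/imsetP => A' A'F -> ->; rewrite usetB_posB // bigU_sub.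
Qed.

Lemma tau_elts d Z F : in_dom d Z F -> forall S, S \in tau F ->
  [/\ S != set0, #|S| <= 2 & S \subset bnd n' (2 * d)].
Proof.
move=> hF S; rewrite (tau_char hF) => /imsetP [A AF ->].
have [_ _ h] := in_domP hF; have [/set0Pn [x xA] c2 _] := h A AF.
split.
- by apply/set0Pn; exists (rk (Defs.bigU F) x); rewrite imset_f.
- exact: leq_trans (leq_imset_card _ _) c2.
- apply: subset_trans (posB_bnd (bigU_sub AF)) (bnd_mono _).
  by case/andP: (card_bigU hF).
Qed.

End Dom.

Notation DT m := {A : {set 'I_m} | (A != set0) && (#|A| <= 2)}.

Definition emb n m (hm : m <= n) (A : {set 'I_m}) : {set 'I_n} :=
  [set widen_ord hm x | x in A].

Lemma emb_all n' m (hm : m <= n'.+1) (T : {set {set 'I_n'.+1}}) :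
  (forall S, S \in T -> [/\ S != set0, #|S| <= 2 & S \subset bnd n' m]) ->
  [set emb hm (val A) | A in [set A : DT m | emb hm (val A) \in T]] = T.
Proof.
move=> hT; apply/setP => S; apply/imsetP/idP => [[A]|ST]; first by rewrite inE => h ->.
case: (hT S ST) => ne c2 sub.
pose P := [set j : 'I_m | widen_ord hm j \in S].
have eP : emb hm P = S.
  apply/setP => x; apply/imsetP/idP => [[j]|xS]; first by rewrite inE => h ->.
  have hx : val x < m by have := subsetP sub x xS; rewrite inE.
  exists (Ordinal hx); last by apply: val_inj.
  rewrite inE; have -> : widen_ord hm (Ordinal hx) = x by apply: val_inj.
  exact xS.
have cP : #|P| = #|S|.
  by rewrite -eP card_imset // => a b /(congr1 val) /= e; apply: val_inj.
have hP : (P != set0) && (#|P| <= 2).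
  rewrite cP c2 andbT; apply: contraNneq ne => P0; by rewrite -eP P0 /emb imset0.
by exists (exist _ P hP); rewrite ?inE /= eP.
Qed.

Lemma card_DT d : 0 < d -> #|{: DT (2 * d)}| = 2 * d ^ 2 + d.
Proof.
move=> d0; rewrite card_sig.
have -> : #|[pred A : {set 'I_(2 * d)} | (A != set0) && (#|A| <= 2)]| =
          #|[set A : {set 'I_(2 * d)} | #|A| == 1] :|: [set A : {set 'I_(2 * d)} | #|A| == 2]|.
  by apply: eq_card => A; rewrite !inE -card_gt0; case: #|A| => [|[|[|q]]].
rewrite cardsU.
have -> : [set A : {set 'I_(2 * d)} | #|A| == 1] :&: [set A : {set 'I_(2 * d)} | #|A| == 2] = set0.
  by apply/setP => A; rewrite !inE; case: #|A| => [|[|[|q]]].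
rewrite cards0 subn0 !card_draws card_ord bin1 bin2.
have -> : (2 * d * (2 * d).-1)./2 = d * (2 * d).-1 by rewrite -mulnA mul2n doubleK.
rewrite -mulnn.
lia.
Qed.

Lemma card_CT d k : 0 < d -> 0 < k ->
  #|{: {ffun {set DT (2 * d)} -> 'Z_(2 ^ k)}}| = 2 ^ (k * 2 ^ (2 * d ^ 2 + d)).
Proof.
move=> d0 k0; rewrite card_ffun card_ord Zp_cast; last first.
  by rewrite (@leq_exp2l 2 1 k).
have -> : #|{: {set DT (2 * d)}}| = 2 ^ #|{: DT (2 * d)}|.
  rewrite -(cardsT (DT (2 * d))) -card_powerset; apply: eq_card => A.
  by rewrite !inE subsetT.
by rewrite card_DT // expnM.
Qed.

Theorem corollary5p9 (n d r k : nat) :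
  0 < n -> 0 < d -> 0 < r -> 0 < k ->
  forall N : nat,
    is_ramsey_number (2 * d) (r + 2 * d - 1) (2 ^ (k * 2 ^ (2 * d ^ 2 + d))) N ->
    N <= n ->
  forall lam : {set {set 'I_n}} -> 'Z_(2 ^ k),
    exists X : {set 'I_n}, #|X| = r /\ canonical_in d lam X.
Proof.
case: n => [//|n'] _ d0 r0 k0 N [Hram _] HNn lam.
have c0 : 0 < 2 ^ (k * 2 ^ (2 * d ^ 2 + d)) by rewrite expn_gt0.
have hm : 2 * d <= n'.+1.
  have [X0 [cX0 _]] := Hram _ HNn (fun _ => Ordinal c0).
  have := card_le_n X0; rewrite cX0; lia.
pose g (Y : {set 'I_n'.+1}) : {ffun {set DT (2 * d)} -> 'Z_(2 ^ k)} :=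
  [ffun s : {set DT (2 * d)} => lam [set usetB Y S | S in [set emb hm (val A) | A in s]]].
pose chi (Y : {set 'I_n'.+1}) := cast_ord (card_CT d0 k0) (enum_rank (g Y)).
have [X [cX mono]] := Hram _ HNn chi.
pose X' := usetB X (bnd n' r).
have hb : bnd n' r \subset bnd n' #|X| by apply: bnd_mono; rewrite cX; lia.
have inX' x : (x \in X') = (x \in X) && (rank X x < r).
  rewrite in_usetB //; case xX: (x \in X) => //=.
  apply/existsP/idP => [[i /andP[]]|lt]; first by rewrite inE => lt /eqP <-.
  by exists (rk X x); rewrite inE /= !val_rk // lt /=.
have X'X : X' \subset X by apply/subsetP => x; rewrite inX' => /andP[].
have cX' : #|X'| = r.
  rewrite card_usetB // card_bnd //; apply: leq_trans (card_le_n X); rewrite cX; lia.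
have sep x y : x \in X' -> y \in X -> y \notin X' -> val x < val y.
  rewrite !inX' => /andP[xX lx] yX; rewrite yX /= -leqNgt => ly.
  rewrite ltnNge; apply/negP => le; have := rank_mono X le; lia.
have cD : #|X :\: X'| = 2 * d - 1.
  by rewrite cardsD (setIidPr X'X) cX cX'; lia.
exists X'; split => //.
have key (F : {set {set 'I_n'.+1}}) : in_dom d X' F -> exists Y : {set 'I_n'.+1}, [/\ Y \subset X, #|Y| = 2 * d &
    F = [set usetB Y S | S in tau F]].
  move=> hF; have BX' := bigU_subZ hF.
  have /andP[l1 l2] := card_bigU hF.
  set B := Defs.bigU F in BX' l1 l2 *.
  pose E := usetB (X :\: X') (bnd n' (2 * d - #|B|)).
  have hE : bnd n' (2 * d - #|B|) \subset bnd n' #|X :\: X'|.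
    by apply: bnd_mono; rewrite cD; lia.
  have cE : #|E| = 2 * d - #|B|.
    by rewrite card_usetB // card_bnd //; lia.
  have ES : E \subset X :\: X' := usetB_sub hE.
  clearbody E.
  have BE : B :&: E = set0.
    apply/setP => x; rewrite in_setI in_set0; apply/negbTE; apply/negP => /andP[xB xE].
    by have := subsetP ES x xE; rewrite inE (subsetP BX' x xB).
  exists (B :|: E); split.
  - rewrite subUset (subset_trans BX' X'X) /=.
    by apply: subset_trans ES _; apply: subsetDl.
  - by rewrite cardsU BE cards0 cE; lia.
  rewrite {1}(F_E hF); apply: eq_in_imset => S ST.
  have SB : S \subset bnd n' #|B| by move: ST; rewrite inE => /andP[].
  have SY : S \subset bnd n' #|B :|: E|.
    by apply: (subset_trans SB); apply: bnd_mono; apply: subset_leq_card; apply: subsetUl.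
  apply/setP => x; rewrite !in_usetB //.
  have sepE y : y \in E -> x \in B -> val x < val y.
    move=> yE xB; have := subsetP ES y yE; rewrite inE => /andP[yX' yX].
    exact: sep (subsetP BX' x xB) yX yX'.
  case xB: (x \in B) => /=.
    rewrite inE xB /=.
    have -> : rank (B :|: E) x = rank B x.
      apply: eq_card => y; rewrite !inE.
      case yB: (y \in B) => //=; case yE: (y \in E) => //=.
      by rewrite ltnNge ltnW // sepE.
    by [].
  rewrite inE xB /=; case xE: (x \in E) => //=.
  apply/esym/negbTE/negP => /existsP [i /andP[iS /eqP e]].
  have := subsetP SB i iS; rewrite inE /= e => lt.
  have : #|B| <= rank (B :|: E) x.
    apply: subset_leq_card; apply/subsetP => y yB; rewrite !inE yB /=.
    case: (ltngtP (val y) (val x)) => // h.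
    - have := subsetP ES x xE; rewrite inE => /andP[xX' xX].
      by have := sep y x (subsetP BX' y yB) xX xX'; rewrite ltnNge ltnW.
    - by have := xB; rewrite (_ : x = y) ?yB //; apply: val_inj.
  by move=> h; move: (leq_trans lt h); rewrite ltnn.
move=> F1 F2 h1 h2 ht.
have [Y1 [Y1X cY1 e1]] := key F1 h1.
have [Y2 [Y2X cY2 e2]] := key F2 h2.
have hg : g Y1 = g Y2.
  by have := mono Y1 Y2 Y1X Y2X cY1 cY2; move/cast_ord_inj/enum_rank_inj.
have T1 := tau_elts h1.
rewrite e1 e2 -ht -(emb_all hm T1).
by have := congr1 (fun f : {ffun {set DT (2 * d)} -> 'Z_(2 ^ k)} => f [set A : DT (2 * d) | emb hm (val A) \in tau F1]) hg; rewrite !ffunE.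
Qed.
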